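(* Let $K$ be a unital commutative ring containing $\mathbb{Q}$ and let $\big(\mathfrak{h},p,\mathfrak{g},[~,~]_\mathfrak{g},\dot{\rho}\big)$ be a $\mathfrak{g}$-augmented Leibniz algebra over $K$. Define a bracket on $\mathfrak{h}$ by $[x,y]_\mathfrak{h}:=p(x).y$ for $x,y\in\mathfrak{h}$. Then: \begin{enumerate} \item $\big(\mathfrak{h},[~,~]_\mathfrak{h}\big)$ is a (left) Leibniz algebra on which $\mathfrak{g}$ acts by derivations (via $\dot\rho$). If $(\Phi,\phi)$ is a morphism of augmented Leibniz algebras, then $\Phi$ is a morphism of Leibniz algebras for these brackets. \item $\mathrm{Ker}(p)$ is a $\mathfrak{g}$-invariant two-sided abelian ideal of $\big(\mathfrak{h},[~,~]_\mathfrak{h}\big)$ satisfying $Q(\mathfrak{h})\subset\mathrm{Ker}(p)\subset\mathfrak{z}(\mathfrak{h})$. \item $\mathrm{Im}(p)$ is an ideal of the Lie algebra $\mathfrak{g}$. \end{enumerate}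
   Context: A (left) Leibniz algebra over $K$ is a $K$-module $\mathfrak{h}$ with a bilinear bracket satisfying $[x,[y,z]]=[[x,y],z]+[y,[x,z]]$ for all $x,y,z$; a morphism of Leibniz algebras is a $K$-linear bracket-preserving map. For a Leibniz algebra $\mathfrak{h}$: $Q(\mathfrak{h})$ is the $K$-submodule of all finite sums $\sum_r\lambda_r[x_r,x_r]$ ($\lambda_r\in K$, $x_r\in\mathfrak{h}$), and $\mathfrak{z}(\mathfrak{h}):=\{x\in\mathfrak{h}\mid [x,y]=0\ \forall y\in\mathfrak{h}\}$. A $\mathfrak{g}$-augmented Leibniz algebra $\big(\mathfrak{h},p,\mathfrak{g},[~,~]_\mathfrak{g},\dot{\rho}\big)$ consists of a Lie algebra $(\mathfrak{g},[~,~]_\mathfrak{g})$ over $K$, a $K$-module $\mathfrak{h}$ which is a left $\mathfrak{g}$-module via $\dot\rho:\mathfrak{g}\otimes\mathfrak{h}\to\mathfrak{h}$, written $\dot\rho_\xi(x)=\xi.x$, and a $K$-linear map $p:\mathfrak{h}\to\mathfrak{g}$ with $p(\xi.x)=[\xi,p(x)]_\mathfrak{g}$ for all $\xi\in\mathfrak{g},x\in\mathfrak{h}$. A morphism $(\Phi,\phi)$ from $\big(\mathfrak{h},p,\mathfrak{g},[~,~]_\mathfrak{g},\dot{\rho}\big)$ to $\big(\mathfrak{h}',p',\mathfrak{g}',[~,~]'_{\mathfrak{g}'},\dot{\rho}'\big)$ is a pair of $K$-linear maps with $\phi:\mathfrak{g}\to\mathfrak{g}'$ a Lie algebra morphism,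 $\Phi:\mathfrak{h}\to\mathfrak{h}'$ satisfying $\Phi(\xi.x)=\phi(\xi).\Phi(x)$, and $p'\circ\Phi=\phi\circ p$. *)

(* Defs.v *)
From HB Require Import structures.
From mathcomp Require Import all_boot all_algebra.
Set Implicit Arguments. Unset Strict Implicit. Unset Printing Implicit Defensive.
Import GRing.Theory.
Local Open Scope ring_scope.

Section Defs.
Variable K : comUnitRingType.

Definition contains_Q : Prop := forall n : nat, (n.+1)%:R \is a @GRing.unit K.

Definition is_linear (U V : lmodType K) (f : U -> V) : Prop :=
  forall (a : K) (x y : U), f (a *: x + y) = a *: f x + f y.

Definition is_bilinear (U V W : lmodType K) (b : U -> V -> W) : Prop :=
  (forall (a : K) x x' y, b (a *: x + x') y = a *: b x y + b x' y) /\
  (forall (a : K) x y y', b x (a *: y + y') = a *: b x y + b x y').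

Definition is_lie_algebra (g : lmodType K) (br : g -> g -> g) : Prop :=
  is_bilinear br /\ (forall x, br x x = 0) /\
  (forall x y z, br x (br y z) + br y (br z x) + br z (br x y) = 0).

Definition is_leibniz (h : lmodType K) (br : h -> h -> h) : Prop :=
  is_bilinear br /\
  (forall x y z, br x (br y z) = br (br x y) z + br y (br x z)).

Definition is_lie_module (g : lmodType K) (brg : g -> g -> g)
  (h : lmodType K) (rho : g -> h -> h) : Prop :=
  is_bilinear rho /\
  (forall a b x, rho (brg a b) x = rho a (rho b x) - rho b (rho a x)).

Definition is_augmented_leibniz (h g : lmodType K) (p : h -> g)
  (brg : g -> g -> g) (rho : g -> h -> h) : Prop :=
  is_lie_algebra brg /\ is_lie_module brg rho /\ is_linear p /\
  (forall xi x, p (rho xi x) = brg xi (p x)).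

Definition is_augmented_morphism (h g : lmodType K) (p : h -> g)
  (brg : g -> g -> g) (rho : g -> h -> h)
  (h' g' : lmodType K) (p' : h' -> g')
  (brg' : g' -> g' -> g') (rho' : g' -> h' -> h')
  (Phi : h -> h') (phi : g -> g') : Prop :=
  is_linear Phi /\ is_linear phi /\
  (forall a b, phi (brg a b) = brg' (phi a) (phi b)) /\
  (forall xi x, Phi (rho xi x) = rho' (phi xi) (Phi x)) /\
  (forall x, p' (Phi x) = phi (p x)).

Definition is_leibniz_morphism (h h' : lmodType K) (br : h -> h -> h)
  (br' : h' -> h' -> h') (f : h -> h') : Prop :=
  is_linear f /\ (forall x y, f (br x y) = br' (f x) (f y)).

Definition induced_bracket (h g : lmodType K) (p : h -> g)
  (rho : g -> h -> h) : h -> h -> h := fun x y => rho (p x) y.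

Definition acts_by_derivations (g h : lmodType K) (rho : g -> h -> h)
  (br : h -> h -> h) : Prop :=
  forall xi x y, rho xi (br x y) = br (rho xi x) y + br x (rho xi y).

Definition Qsq (h : lmodType K) (br : h -> h -> h) (z : h) : Prop :=
  exists s : seq (K * h), z = \sum_(u <- s) u.1 *: br u.2 u.2.

Definition leib_center (h : lmodType K) (br : h -> h -> h) (z : h) : Prop :=
  forall y, br z y = 0.

Definition ker_of (h g : lmodType K) (p : h -> g) (x : h) : Prop := p x = 0.
Definition im_of (h g : lmodType K) (p : h -> g) (y : g) : Prop :=
  exists x, y = p x.

Definition is_submodule (V : lmodType K) (I : V -> Prop) : Prop :=
  I 0 /\ (forall (a : K) x y, I x -> I y -> I (a *: x + y)).

Definition is_two_sided_ideal (V : lmodType K) (br : V -> V -> V)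
  (I : V -> Prop) : Prop :=
  is_submodule I /\ (forall x y, I y -> I (br x y)) /\
  (forall x y, I x -> I (br x y)).

Definition is_abelian_sub (V : lmodType K) (br : V -> V -> V)
  (I : V -> Prop) : Prop := forall x y, I x -> I y -> br x y = 0.

Definition is_invariant (g h : lmodType K) (rho : g -> h -> h)
  (I : h -> Prop) : Prop := forall xi x, I x -> I (rho xi x).

Definition subset_pred (V : Type) (A B : V -> Prop) : Prop :=
  forall x, A x -> B x.
End Defs.

(* Main.v *)
Require Import Defs.
From mathcomp Require Import all_boot all_algebra.
Import GRing.Theory.
Local Open Scope ring_scope.
Set Implicit Arguments. Unset Strict Implicit.

Section H.
Variable K : comUnitRingType.

Lemma lin0 (U V : lmodType K) (f : U -> V) : is_linear f -> f 0 = 0.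
Proof. move=> L; have := L 1 0 0; rewrite scale1r addr0 => /(congr1 (fun v => v - f 0)).
by rewrite subrr addrK scale1r => ->. Qed.
Lemma linD (U V : lmodType K) (f : U -> V) : is_linear f -> forall x y, f (x + y) = f x + f y.
Proof. by move=> L x y; have := L 1 x y; rewrite !scale1r. Qed.
Lemma linZ (U V : lmodType K) (f : U -> V) : is_linear f -> forall a x, f (a *: x) = a *: f x.
Proof. by move=> L a x; have := L a x 0; rewrite !addr0 (lin0 L) addr0. Qed.

Lemma bil0l (U V W : lmodType K) (b : U -> V -> W) : is_bilinear b -> forall y, b 0 y = 0.
Proof. case=> L _ y; have := L 1 0 0 y; rewrite scale1r addr0 => /(congr1 (fun v => v - b 0 y)).
by rewrite subrr addrK scale1r => ->. Qed.
Lemma bil0r (U V W : lmodType K) (b : U -> V -> W) : is_bilinear b -> forall x, b x 0 = 0.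
Proof. case=> _ L x; have := L 1 x 0 0; rewrite scale1r addr0 => /(congr1 (fun v => v - b x 0)).
by rewrite subrr addrK scale1r => ->. Qed.
Lemma bilDl (U V W : lmodType K) (b : U -> V -> W) : is_bilinear b -> forall x x' y, b (x + x') y = b x y + b x' y.
Proof. by case=> L _ x x' y; have := L 1 x x' y; rewrite !scale1r. Qed.
Lemma bilDr (U V W : lmodType K) (b : U -> V -> W) : is_bilinear b -> forall x y y', b x (y + y') = b x y + b x y'.
Proof. by case=> _ L x y y'; have := L 1 x y y'; rewrite !scale1r. Qed.
Lemma bilZr (U V W : lmodType K) (b : U -> V -> W) : is_bilinear b -> forall a x y, b x (a *: y) = a *: b x y.
Proof. move=> B a x y; have := B.2 a x y 0; by rewrite !addr0 (bil0r B) addr0. Qed.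
End H.

Theorem proposition2p2 (K : comUnitRingType) (hQ : contains_Q K)
  (h g : lmodType K) (p : h -> g) (brg : g -> g -> g) (rho : g -> h -> h)
  (Haug : is_augmented_leibniz p brg rho) :
  let brh := induced_bracket p rho in
  (* 1 *)
  (is_leibniz brh /\ acts_by_derivations rho brh /\
   (forall (h' g' : lmodType K) (p' : h' -> g') (brg' : g' -> g' -> g')
      (rho' : g' -> h' -> h') (Phi : h -> h') (phi : g -> g'),
      is_augmented_leibniz p' brg' rho' ->
      is_augmented_morphism p brg rho p' brg' rho' Phi phi ->
      is_leibniz_morphism brh (induced_bracket p' rho') Phi)) /\
  (* 2 *)
  (is_invariant rho (ker_of p) /\ is_two_sided_ideal brh (ker_of p) /\
   is_abelian_sub brh (ker_of p) /\
   subset_pred (Qsq brh) (ker_of p) /\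
   subset_pred (ker_of p) (leib_center brh)) /\
  (* 3 *)
  is_two_sided_ideal brg (im_of p).
Proof.
case: Haug => [[Bg [Alt Jac]] [[Br Mod] [Lp Pe]]].
rewrite /induced_bracket /=.
have Bg' : is_bilinear brg := Bg.
have Br' : is_bilinear rho := conj Br.1 Br.2.
repeat split.
- by move=> a x x' y; rewrite Lp Br.1.
- by move=> a x y y'; rewrite Br.2.
- by move=> x y z; rewrite Pe Mod addrNK.
- by move=> xi x y; rewrite Pe Mod addrNK.
- by case: H0.
- move=> x y; case: H0 => [_ [_ [_ [Prho Pp]]]]; by rewrite Prho Pp.
- by move=> xi x; rewrite /ker_of Pe => ->; rewrite (bil0r Bg').
- exact: lin0 Lp.
- by move=> a x y; rewrite /ker_of Lp => -> ->; rewrite scaler0 addr0.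
- by move=> x y; rewrite /ker_of Pe => ->; rewrite (bil0r Bg').
- by move=> x y; rewrite /ker_of => ->; rewrite (bil0l Br') (lin0 Lp).
- by move=> x y; rewrite /ker_of => -> _; rewrite (bil0l Br').
- move=> z [s ->]; rewrite /ker_of; elim: s => [|u s IH].
    by rewrite big_nil (lin0 Lp).
  by rewrite big_cons (linD Lp) IH addr0 (linZ Lp) Pe Alt scaler0.
- by move=> x; rewrite /ker_of /leib_center => -> y; rewrite (bil0l Br').
- by exists 0; rewrite (lin0 Lp).
- by move=> a _ _ [x ->] [y ->]; exists (a*:x+y); rewrite Lp.
- by move=> x _ [y ->]; exists (rho x y); rewrite Pe.
- move=> _ y [x ->]; exists (rho y (-x)); rewrite Pe.
  have anti : forall a b, brg a b = - brg b a.
    move=> a b; apply/eqP; rewrite -subr_eq0 opprK.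
    have := Alt (a + b); rewrite (bilDl Bg') !(bilDr Bg') !Alt add0r addr0 => ->.
    by [].
  by rewrite -scaleN1r (linZ Lp) (bilZr Bg') scaleN1r -anti.
Qed.
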